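(* Let $u_1,u_2,u_3,u_4,u_5\in\Sigma^*$ and letters $a_i,a_j,a_k\in\Sigma$ with $a_j\neq a_k$, $a_j\neq a_i$ and $a_i\neq a_k$, such that $a_k$ is not a suffix of $u_3$. Let $w=u_1a_iu_2a_ju_3a_ku_4a_iu_5$. Then there exists an element of $\mathtt{BR}(w)$ which is not rich.
   Context: $\Sigma$ is an alphabet and $\Sigma^*$ the set of finite words over it (including the empty word). For a word $w=w_1\cdots w_n$, $w^R=w_n\cdots w_1$; $w$ is a palindrome if $w=w^R$; a factor of $w$ is a word $u$ with $w=puq$. A word $w$ is rich if the number of distinct nonempty palindromic factors of $w$ equals $|w|$. The block reversal of a nonempty word $w$ is $\mathtt{BR}(w)=\{B_t\cdots B_1 : w=B_1\cdots B_t,\ t\ge1,\ \text{each } B_i \text{ nonempty}\}$. *)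

(* Defs.v *)
From mathcomp Require Import all_boot.
Set Implicit Arguments. Unset Strict Implicit. Unset Printing Implicit Defensive.

Definition palindrome (T : eqType) (w : seq T) : bool := rev w == w.

Definition factors (T : eqType) (w : seq T) : seq (seq T) :=
  [seq take j (drop i w) | i <- iota 0 (size w).+1, j <- iota 0 (size w).+1].

Definition pal_factors (T : eqType) (w : seq T) : seq (seq T) :=
  undup [seq u <- factors w | (u != [::]) && palindrome u].

Definition rich (T : eqType) (w : seq T) : Prop := size (pal_factors w) = size w.

Definition in_BR (T : eqType) (w v : seq T) : Prop :=
  exists bs : seq (seq T),
    [/\ 1 <= size bs, all (fun b => b != [::]) bs,
        flatten bs = w & v = flatten (rev bs)].

(* Main.v *)
Require Import Defs.
From mathcomp Require Import all_boot zify.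

Lemma small (T : eqType) (a c y : T) : a != c -> a != y -> c != y ->
  size (pal_factors [:: a; c; y; a]) <= 3.
Proof.
move=> ac ay cy.
have ca : (c == a) = false by rewrite eq_sym; apply/negbTE.
have ya : (y == a) = false by rewrite eq_sym; apply/negbTE.
have yc : (y == c) = false by rewrite eq_sym; apply/negbTE.
have ac' := negbTE ac; have ay' := negbTE ay; have cy' := negbTE cy.
apply: (@uniq_leq_size _ _ [:: [:: a]; [:: c]; [:: y]]); first exact: undup_uniq.
move=> u; rewrite mem_undup mem_filter => /andP[/andP[ne pu]].
move=> /allpairsP [[i j] [/= Hi Hj E]]; subst u.
move: Hi Hj.
case: i ne pu => [|[|[|[|[|i]]]]]; case: j => [|[|[|[|[|j]]]]] //=.
all: rewrite /palindrome /=.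
all: move=> _ H _ _; move: H; rewrite /rev /= ?eqseq_cons ?eqxx ?ac' ?ay' ?cy' ?ca ?ya ?yc /= ?andbF /=.
all: rewrite ?in_cons ?eqseq_cons ?eqxx ?ac' ?ay' ?cy' ?ca ?ya ?yc /= ?orbT /=.
all: by [].
Qed.

Section Th.
Variable T : eqType.
Implicit Types (w u p s f : seq T).

Lemma mem_factors w u : (u \in factors w) = infix u w.
Proof.
apply/idP/idP.
  move=> /allpairsP [[i j] [_ _ ->]] /=.
  exact: (infix_trans (infix_take _ _) (infix_drop _ _)).
move=> H; apply/allpairsP.
exists (infix_index u w, size u); split.
- by rewrite mem_iota add0n ltnS infixTindex.
- by rewrite mem_iota add0n ltnS size_infix.
- by move: H; rewrite infixE => /eqP.
Qed.

Lemma mem_pal w u : (u \in pal_factors w) = [&& u != [::], palindrome u & infix u w].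
Proof. by rewrite mem_undup mem_filter mem_factors andbA. Qed.

Lemma pal_rev_size w : size (pal_factors (rev w)) = size (pal_factors w).
Proof.
apply: perm_size; apply: uniq_perm; try exact: undup_uniq.
move=> u; rewrite !mem_pal -infix_revLR.
case: (boolP (palindrome u)) => [/eqP->|]; by rewrite ?andbF.
Qed.

Lemma key w x u1 u2 : palindrome u1 -> palindrome u2 ->
  suffix u1 (rcons w x) -> suffix u2 (rcons w x) -> size u1 < size u2 -> infix u1 w.
Proof.
move=> p1 p2 s1 s2 lt12.
have le2 : size u2 <= size (rcons w x) by apply: size_infix; apply: suffixW.
have e1 : u1 = drop (size u2 - size u1) u2.
  move: s1 s2; rewrite !suffixE => /eqP e1 /eqP e2.
  rewrite -e2 drop_drop -e1; congr drop.
  rewrite -e1 in lt12; rewrite -e2 in lt12 le2 *.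
  move: lt12 le2; rewrite !size_drop; lia.
set k := size u2 - size u1.
have ek : u2 = u1 ++ rev (take k u2).
  by rewrite -{1}(eqP p2) -{1}(cat_take_drop k u2) rev_cat -e1 (eqP p1).
have szk : size (rev (take k u2)) = k by rewrite size_rev size_takel // /k; lia.
move: szk; case/lastP: (rev (take k u2)) ek => [|t z] ek szk.
  by rewrite /= /k in szk; lia.
case/suffixP: s2 => q; rewrite ek -rcons_cat -rcons_cat => /rcons_inj [-> _].
by apply/infixP; exists q, t; rewrite catA.
Qed.

Lemma pal_rcons w x : size (pal_factors (rcons w x)) <= (size (pal_factors w)).+1.
Proof.
set P := pal_factors (rcons w x).
set L := head [::] [seq u <- P | u \notin pal_factors w].
have same : forall u1 u2, u1 \in P -> u1 \notin pal_factors w ->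
    u2 \in P -> u2 \notin pal_factors w -> size u1 <= size u2 -> u1 = u2.
  move=> u1 u2; rewrite /P !mem_pal => /and3P[n1 p1 i1] h1 /and3P[n2 p2 i2] h2 le12.
  have s1 : suffix u1 (rcons w x).
    by move: i1; rewrite infix_rconsl => /orP[//|H]; move: h1; rewrite n1 p1 H.
  have s2 : suffix u2 (rcons w x).
    by move: i2; rewrite infix_rconsl => /orP[//|H]; move: h2; rewrite n2 p2 H.
  move: le12; rewrite leq_eqVlt => /orP[/eqP E|lt].
    by move: s1 s2; rewrite !suffixE => /eqP e1 /eqP e2; apply: (etrans (esym e1)); rewrite E; exact: e2.
  by move: h1; rewrite n1 p1 (key _ _ _ _ p1 p2 s1 s2 lt).
have -> : (size (pal_factors w)).+1 = size (L :: pal_factors w) by [].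
apply: uniq_leq_size; first exact: undup_uniq.
move=> u uP; rewrite in_cons; apply/orP; case: (boolP (u \in pal_factors w)) => hu; first by right.
left.
have uN : u \in [seq u <- P | u \notin pal_factors w] by rewrite mem_filter hu.
have LN : L \in [seq u <- P | u \notin pal_factors w].
  by rewrite /L; case: [seq u <- P | u \notin pal_factors w] uN => //= v s _; rewrite in_cons eqxx.
move: LN; rewrite mem_filter => /andP[hL LP].
apply/eqP.
case: (leqP (size u) (size L)) => H; first exact: same.
by symmetry; apply: same => //; apply: ltnW.
Qed.

Lemma pal_cons w x : size (pal_factors (x :: w)) <= (size (pal_factors w)).+1.
Proof. by rewrite -pal_rev_size rev_cons -(pal_rev_size w); apply: pal_rcons. Qed.

Lemma pal_cat p f s : size (pal_factors (p ++ f ++ s)) <= size (pal_factors f) + size p + size s.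
Proof.
elim: p => [|y p IH] /=.
  elim/last_ind: s => [|s z IH]; first by rewrite cats0 !addn0.
  rewrite -rcons_cat size_rcons; apply: leq_trans (pal_rcons _ _) _; lia.
by apply: leq_trans (pal_cons _ _) _; lia.
Qed.
End Th.

Lemma notrich_infix (T : eqType) (f v : seq T) :
  infix f v -> size (pal_factors f) < size f -> ~ rich v.
Proof.
case/infixP => p [s ->] lt; rewrite /rich => E.
have := @pal_cat T p f s; rewrite E !size_cat; lia.
Qed.

Lemma flatten_filter_ne (T : eqType) (L : seq (seq T)) :
  flatten [seq b <- L | b != [::]] = flatten L.
Proof. by elim: L => //= b L IH; case: b => //=; rewrite IH. Qed.

Lemma BR_of (T : eqType) (L : seq (seq T)) : has (fun b => b != [::]) L ->
  in_BR (flatten L) (flatten (rev L)).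
Proof.
move=> hL; exists [seq b <- L | b != [::]]; split.
- by rewrite size_filter -has_count.
- exact: filter_all.
- exact: flatten_filter_ne.
- by rewrite -filter_rev flatten_filter_ne.
Qed.

Theorem mainTheorem5 (T : eqType) (u1 u2 u3 u4 u5 : seq T) (ai aj ak : T) :
  aj != ak -> aj != ai -> ai != ak ->
  ~~ suffix [:: ak] u3 ->
  exists v : seq T,
    in_BR (u1 ++ ai :: u2 ++ aj :: u3 ++ ak :: u4 ++ ai :: u5) v /\ ~ rich v.
Proof.
move=> jk ji ik.
have ij : ai != aj by rewrite eq_sym.
case/lastP: u3 => [|u3 x] hs.
  set L := [:: u1; ai :: u2; [:: aj]; [:: ak]; u4 ++ [:: ai]; u5].
  exists (flatten (rev L)); split.
    have -> : u1 ++ ai :: u2 ++ aj :: [::] ++ ak :: u4 ++ ai :: u5 = flatten L.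
      by rewrite /L /= !cats0 -!catA.
    by apply: BR_of; rewrite /L /= ?orbT.
  apply: (@notrich_infix T [:: ai; ak; aj; ai]).
    apply/infixP; exists (u5 ++ u4), (u2 ++ u1).
    by rewrite /L /rev /= !cats0 -!catA.
  have kj : ak != aj by rewrite eq_sym.
  by apply: leq_ltn_trans (@small T ai ak aj ik ij kj) _.
have xk : x != ak.
  by apply: contra hs => /eqP ->; rewrite -cats1 suffix_suffix.
case: (eqVneq x ai) => [xi|xi].
  subst x.
  set L := [:: u1; ai :: u2; [:: aj]; rcons u3 ai ++ [:: ak]; u4 ++ [:: ai]; u5].
  exists (flatten (rev L)); split.
    have -> : u1 ++ ai :: u2 ++ aj :: rcons u3 ai ++ ak :: u4 ++ ai :: u5 = flatten L.
      by rewrite /L /= !cats0 -!catA.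
    by apply: BR_of; rewrite /L /= ?orbT.
  apply: (@notrich_infix T [:: ai; ak; aj; ai]).
    apply/infixP; exists (u5 ++ u4 ++ ai :: u3), (u2 ++ u1).
    by rewrite /L /rev /= !cats0 -!cats1 -!catA.
  have kj : ak != aj by rewrite eq_sym.
  by apply: leq_ltn_trans (@small T ai ak aj ik ij kj) _.
set L := [:: u1; ai :: u2 ++ aj :: u3; [:: x]; [:: ak]; u4 ++ [:: ai]; u5].
exists (flatten (rev L)); split.
  have -> : u1 ++ ai :: u2 ++ aj :: rcons u3 x ++ ak :: u4 ++ ai :: u5 = flatten L.
    by rewrite /L /= !cats0 -!cats1 -!catA.
  by apply: BR_of; rewrite /L /= ?orbT.
apply: (@notrich_infix T [:: ai; ak; x; ai]).
  apply/infixP; exists (u5 ++ u4), (u2 ++ aj :: u3 ++ u1).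
  by rewrite /L /rev /= !cats0 -!catA.
have kx : ak != x by rewrite eq_sym.
have ix : ai != x by rewrite eq_sym.
by apply: leq_ltn_trans (@small T ai ak x ik ix kx) _.
Qed.
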